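(* Let $W\subset\mathbb{P}^4$ be any cubic hypersurface whose singular locus contains a line $\ell$. Then $\mathbb{P}^4\setminus W$ contains a cylinder, i.e. a Zariski open subset isomorphic to $Z\times\mathbb{A}^1$ for some variety $Z$.
   Context: Over $\mathbb{C}$. *)

(* Defs.v *)
From mathcomp Require Import all_boot all_algebra.
From mathcomp Require Import reals complex.
From mathcomp Require Import mpoly.
Set Implicit Arguments. Unset Strict Implicit. Unset Printing Implicit Defensive.
Import GRing.Theory.
Local Open Scope ring_scope.

(* Points of K^n are functions 'I_n -> K; a point of P^4 is represented by a
   nonzero vector of K^5 (all predicates/maps below are compatible with scaling). *)
Section ClassicalAG.
Variable K : fieldType.

Definition vec (n : nat) := 'I_n -> K.

Definition lin_comb (s t : K) (a b : vec 5) : vec 5 := fun i => s * a i + t * b i.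

Definition lin_indep2 (a b : vec 5) : Prop :=
  forall s t : K, (forall i, lin_comb s t a b i = 0) -> s = 0 /\ t = 0.

Definition cubic_form (F : {mpoly K[5]}) : Prop := F != 0 /\ F \is 3.-homog.

Definition sing_point (F : {mpoly K[5]}) (x : vec 5) : Prop :=
  F.@[x] = 0 /\ forall i : 'I_5, (mderiv i F).@[x] = 0.

Definition line_in_sing (F : {mpoly K[5]}) (a b : vec 5) : Prop :=
  lin_indep2 a b /\ forall s t : K, sing_point F (lin_comb s t a b).

(* Every Zariski open subset of P^4 \ V(F) is of this form. *)
Definition homog_family (S : seq {mpoly K[5]}) : Prop :=
  forall G, G \in S -> exists d : nat, G \is d.-homog.

Definition open_in_compl (F : {mpoly K[5]}) (S : seq {mpoly K[5]}) (x : vec 5) : Prop :=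
  F.@[x] != 0 /\ exists2 G, G \in S & G.@[x] != 0.

Definition loc_closed (N : nat) (A B : seq {mpoly K[N]}) (z : vec N) : Prop :=
  (forall f, f \in A -> f.@[z] = 0) /\ exists2 g, g \in B & g.@[z] != 0.

Definition irreducible_set (N : nat) (Z : vec N -> Prop) : Prop :=
  (exists z, Z z) /\
  forall p q : {mpoly K[N]}, (forall z, Z z -> (p * q).@[z] = 0) ->
    (forall z, Z z -> p.@[z] = 0) \/ (forall z, Z z -> q.@[z] = 0).

(* The product Z x A^1, as a subset of K^(N+1) (last coordinate = A^1). *)
Definition first_coords (N : nat) (y : vec N.+1) : vec N :=
  fun i => y (widen_ord (leqnSn N) i).

Definition cyl_set (N : nat) (Z : vec N -> Prop) (y : vec N.+1) : Prop :=
  Z (first_coords y).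

Definition regular_fun (M : nat) (X : vec M -> Prop) (f : vec M -> K) : Prop :=
  forall y, X y -> exists p q : {mpoly K[M]}, q.@[y] != 0 /\
    forall y', X y' -> q.@[y'] != 0 -> f y' = p.@[y'] / q.@[y'].

Definition proj_regular_fun (U : vec 5 -> Prop) (f : vec 5 -> K) : Prop :=
  forall x, U x -> exists (d : nat) (G H : {mpoly K[5]}),
    [/\ G \is d.-homog, H \is d.-homog, H.@[x] != 0 &
    forall x', U x' -> H.@[x'] != 0 -> f x' = G.@[x'] / H.@[x']].

Definition regular_to_proj (M : nat) (X : vec M -> Prop) (psi : vec M -> vec 5) : Prop :=
  forall y, X y -> exists (g : 'I_5 -> {mpoly K[M]}) (h : {mpoly K[M]}),
    [/\ h.@[y] != 0, (exists i, (g i).@[y] != 0) &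
    forall y', X y' -> h.@[y'] != 0 ->
      exists2 c : K, c != 0 & forall i, psi y' i = c * (g i).@[y']].

Definition proj_iso (U : vec 5 -> Prop) (M : nat) (Y : vec M -> Prop) : Prop :=
  exists (phi : vec 5 -> vec M) (psi : vec M -> vec 5),
    [/\ (forall x, U x -> Y (phi x)) /\ (forall y, Y y -> U (psi y)),
        forall x, U x -> (exists2 c : K, c != 0 & forall i, psi (phi x) i = c * x i),
        forall y, Y y -> phi (psi y) = y,
        forall j : 'I_M, proj_regular_fun U (fun x => phi x j) &
        regular_to_proj Y psi].

Definition contains_cylinder (F : {mpoly K[5]}) : Prop :=
  exists (S : seq {mpoly K[5]}) (N : nat) (A B : seq {mpoly K[N]}),
    [/\ homog_family S, irreducible_set (loc_closed A B) &
        proj_iso (open_in_compl F S) (cyl_set (loc_closed A B))].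

End ClassicalAG.

(* Main.v *)
Require Import Defs.
From mathcomp Require Import all_boot all_algebra.
From mathcomp Require Import reals complex.
From mathcomp Require Import mpoly.
From mathcomp Require Import zify ring lra.
From Stdlib Require Import Classical FunctionalExtensionality.
Set Implicit Arguments. Unset Strict Implicit. Unset Printing Implicit Defensive.
Import GRing.Theory Num.Theory.
Local Open Scope ring_scope.

Section Gen.
Variable K : numFieldType.

Lemma alg_ind n (P : {mpoly K[n]} -> Prop) :
  (forall c, P c%:MP) -> (forall i, P 'X_i) ->
  (forall p q, P p -> P q -> P (p + q)) ->
  (forall p q, P p -> P q -> P (p * q)) -> forall p, P p.
Proof.
move=> hC hX hD hM p; rewrite (mpolyE p).
apply: (big_ind P) => //; first by rewrite -mpolyC0.
move=> m _; rewrite -mul_mpolyC; apply: (hM) => //.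
rewrite mpolyXE_id; apply: (big_ind P) => //; first by rewrite -mpolyC1.
move=> i _; move: (m i) => k; elim: k => [|k IH]; first by rewrite expr0 -mpolyC1.
by rewrite exprS; apply: (hM).
Qed.

Lemma meval_mderivX n (x : 'I_n -> K) i j :
  (mderiv i 'X_j).@[x] = (i == j)%:R.
Proof.
rewrite mderivX mnm1E mevalZ eq_sym; have [->|hne] := eqVneq i j; last by rewrite mul0r.
have -> : (U_(j) - U_(j))%MM = 0%MM by apply/mnmP => k; rewrite mnmBE mnm0E subnn.
by rewrite mpolyX0 meval1 mulr1.
Qed.

Lemma deriv_rep n (x : 'I_n -> K) (D : {mpoly K[n]} -> K) :
  (forall p q, D (p + q) = D p + D q) ->
  (forall p q, D (p * q) = D p * q.@[x] + p.@[x] * D q) ->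
  (forall c, D c%:MP = 0) ->
  forall p, D p = \sum_i (mderiv i p).@[x] * D 'X_i.
Proof.
move=> hD hM hC; elim/alg_ind.
- by move=> c; rewrite hC big1 // => i _; rewrite mderivC meval0 mul0r.
- move=> j; rewrite (bigD1 j) //= meval_mderivX eqxx mul1r big1 ?addr0 //.
  by move=> i /negbTE hij; rewrite meval_mderivX hij mul0r.
- move=> p q hp hq; rewrite hD hp hq -big_split; apply: eq_bigr => i _.
  by rewrite mderivD mevalD mulrDl.
- move=> p q hp hq; rewrite hM hp hq big_distrl big_distrr -big_split /=.
  apply: eq_bigr => i _; rewrite mderivM mevalD !mevalM.
  by rewrite mulrDl; congr (_ + _); rewrite -!mulrA; congr (_ * _); rewrite mulrC // mulrCA.
Qed.

Definition Tl n (x w : 'I_n -> K) (p : {mpoly K[n]}) : {poly K} :=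
  mmap (@polyC K) (fun i => (x i)%:P + w i *: 'X) p.

Lemma TlM n (x w : 'I_n -> K) p q : Tl x w (p * q) = Tl x w p * Tl x w q.
Proof. by rewrite /Tl rmorphM. Qed.
Lemma TlD n (x w : 'I_n -> K) p q : Tl x w (p + q) = Tl x w p + Tl x w q.
Proof. by rewrite /Tl mmapD. Qed.
Lemma TlC n (x w : 'I_n -> K) c : Tl x w c%:MP = c%:P.
Proof. by rewrite /Tl mmapC. Qed.
Lemma TlX n (x w : 'I_n -> K) i : Tl x w 'X_i = (x i)%:P + w i *: 'X.
Proof. by rewrite /Tl mmapX mmap1U. Qed.

Lemma Tl_horner n (x w : 'I_n -> K) p mu :
  (Tl x w p).[mu] = p.@[fun i => x i + mu * w i].
Proof.
elim/alg_ind: p.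
- by move=> c; rewrite TlC hornerC mevalC.
- by move=> i; rewrite TlX mevalXU hornerD hornerC hornerZ hornerX mulrC.
- by move=> p q hp hq; rewrite TlD hornerD hp hq mevalD.
- by move=> p q hp hq; rewrite TlM hornerM hp hq mevalM.
Qed.

Lemma Tl_coef0 n (x w : 'I_n -> K) p : (Tl x w p)`_0 = p.@[x].
Proof.
rewrite -horner_coef0 Tl_horner; apply: meval_eq => i; by rewrite mul0r addr0.
Qed.

Lemma Tl_coef1 n (x w : 'I_n -> K) p :
  (Tl x w p)`_1 = \sum_i (mderiv i p).@[x] * w i.
Proof.
pose D q := (Tl x w q)`_1.
have -> : (Tl x w p)`_1 = D p by [].
rewrite (@deriv_rep n x D).
- by apply: eq_bigr => i _; rewrite /D TlX coefD coefC coefZ coefX /= mulr1 add0r.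
- by move=> q r; rewrite /D TlD coefD.
- move=> q r; rewrite /D TlM coefM big_ord_recr /= big_ord_recr big_ord0 /= add0r.
  by rewrite !Tl_coef0 addrC mulrC.
- by move=> c; rewrite /D TlC coefC.
Qed.

Lemma meval_homog n d (p : {mpoly K[n]}) (c : K) (v : 'I_n -> K) :
  p \is d.-homog -> p.@[fun i => c * v i] = c ^+ d * p.@[v].
Proof.
move=> hp; rewrite !mevalE big_distrr /= !big_seq; apply: eq_bigr => m hm.
rewrite (eq_bigr (fun i => c ^+ m i * v i ^+ m i)); last by move=> i _; rewrite exprMn.
rewrite big_split /= prodrXr -mdegE (dhomog_mf hp hm).
by rewrite mulrCA.
Qed.

Lemma Tl_size n d (x w : 'I_n -> K) (p : {mpoly K[n]}) :
  p \is d.-homog -> (size (Tl x w p) <= d.+1)%N.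
Proof.
move=> hp; rewrite /Tl /mmap; apply: (leq_trans (size_sum _ _ _)).
apply/bigmax_leqP_seq => m hm _.
apply: (leq_trans (size_polyMleq _ _)).
have h1 := size_polyC_leq1 (p@_m).
have h2 : (size (mmap1 (fun i => ((x i)%:P + w i *: 'X)%R) m) <= d.+1)%N.
  rewrite /mmap1; apply: (leq_trans (size_poly_prod_leq _ _)).
  have hs : forall i, (size (((x i)%:P + w i *: 'X) ^+ m i)%R <= (m i).+1)%N.
    move=> i; apply: (leq_trans (size_poly_exp_leq _ _)).
    have : (size ((x i)%:P + w i *: 'X)%R <= 2)%N.
      apply: (leq_trans (size_polyD _ _)); rewrite geq_max.
      apply/andP; split; first by apply: (leq_trans (size_polyC_leq1 _)).
      by apply: (leq_trans (size_scale_leq _ _)); rewrite size_polyX.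
    case: (size _) => [|[|[|k]]] //= _; by rewrite ?mul0n ?mul1n.
  have hsum : (\sum_(i < n) size (((x i)%:P + w i *: 'X) ^+ m i)%R <= \sum_(i < n) (m i).+1)%N.
    by apply: leq_sum => i _; apply: hs.
  have : (\sum_(i < n) (m i).+1 = d + n)%N.
    rewrite (eq_bigr (fun i => m i + 1)%N); last by move=> i _; rewrite addn1.
    by rewrite big_split /= -mdegE (dhomog_mf hp hm) sum_nat_const card_ord muln1.
  rewrite cardT size_enum_ord => hE; rewrite hE in hsum.
  by rewrite leq_subLR addnS ltnS addnC.
apply: leq_trans h2; move: h1; case: (size (p@_m)%:P) => [|[|]] //= _; by rewrite ?add0n ?add1n ?leq_pred.
Qed.

Lemma poly_vanish_nz (P : {poly K}) :
  (forall mu, mu != 0 -> P.[mu] = 0) -> P = 0.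
Proof.
move=> hP; apply/eqP; apply: contraT => hnz.
pose rs := [seq (i.+1)%:R : K | i <- iota 0 (size P)].
have := max_poly_roots hnz (rs := rs).
rewrite size_map size_iota ltnn; apply.
  apply/allP => y /mapP [i _ ->]; rewrite /root; apply/eqP/hP.
  by rewrite pnatr_eq0.
rewrite map_inj_uniq ?iota_uniq // => i j /eqP; rewrite eqr_nat eqSS => /eqP.
by [].
Qed.

Lemma meval0v n (q : {mpoly K[n]}) : q.@[fun _ => 0] = q@_0.
Proof.
elim/alg_ind: q.
- by move=> c; rewrite mevalC mcoeffC eqxx mulr1.
- move=> i; rewrite mevalXU mcoeffX; case: eqP => // h.
  by have := congr1 (fun m : 'X_{1..n} => m i) h; rewrite mnm1E eqxx mnm0E.
- by move=> p q hp hq; rewrite mevalD mcoeffD hp hq.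
- by move=> p q hp hq; rewrite mevalM hp hq ((mcoeff0_is_multiplicative n K).1).
Qed.

Definition delta n (i : 'I_n) : 'I_n -> K := fun j => (i == j)%:R.

Lemma vanish_deriv n (p : {mpoly K[n]}) i :
  (forall v, p.@[v] = 0) -> forall v, (mderiv i p).@[v] = 0.
Proof.
move=> hp v.
have hT : Tl v (delta i) p = 0.
  apply: poly_vanish_nz => mu _; by rewrite Tl_horner hp.
have := Tl_coef1 v (delta i) p; rewrite hT coef0.
rewrite (bigD1 i) //= big1 ?addr0; first by rewrite /delta eqxx mulr1.
by move=> j /negbTE hj; rewrite /delta eq_sym hj mulr0.
Qed.

Lemma vanish_zero n (p : {mpoly K[n]}) : (forall v, p.@[v] = 0) -> p = 0.
Proof.
move=> hp; apply/mpolyP => m; rewrite mcoeff0.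
have hv : forall v, (mderivm m p).@[v] = 0.
  rewrite /mderivm; elim: (enum 'I_n) => [|i s IH] //= v.
  move: v; elim: (m i) => [|k IHk] //= v.
  by apply: (@vanish_deriv n _ i IHk v).
have := hv (fun _ => 0); rewrite meval0v mcoeff_mderivm addm0 => /eqP.
rewrite mulrn_eq0 => /orP [|/eqP //].
move=> h0; exfalso; move: h0; apply/negP; rewrite -lt0n; apply: prodn_gt0 => i; by rewrite ffactnn fact_gt0.
Qed.

Lemma taylor_sing n (F : {mpoly K[n]}) (x w : 'I_n -> K) :
  F \is 3.-homog -> F.@[x] = 0 -> (forall i, (mderiv i F).@[x] = 0) ->
  F.@[fun i => x i + w i] = F.@[w] + \sum_i (mderiv i F).@[w] * x i.
Proof.
move=> hF hx hdx.
set phi := Tl x w F; set g := Tl w x F.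
have p0 : phi`_0 = 0 by rewrite Tl_coef0.
have p1 : phi`_1 = 0.
  by rewrite Tl_coef1 big1 // => i _; rewrite hdx mul0r.
have sp := Tl_size x w hF; have sg := Tl_size w x hF.
have hphi : forall nu, phi.[nu] = phi`_2 * nu ^+ 2 + phi`_3 * nu ^+ 3.
  move=> nu; rewrite (horner_coef_wide _ sp) !big_ord_recr big_ord0 /= p0 p1.
  by rewrite !mul0r !add0r.
have hg : g = (phi`_3)%:P + phi`_2 *: 'X.
  apply/eqP; rewrite -subr_eq0; apply/eqP; apply: poly_vanish_nz => mu hmu.
  rewrite hornerD hornerN hornerD hornerC hornerZ hornerX.
  have -> : g.[mu] = mu ^+ 3 * phi.[mu^-1].
    rewrite /g /phi !Tl_horner -(meval_homog mu _ hF).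
    apply: meval_eq => i /=; by rewrite mulrDr mulrA mulfV // mul1r addrC.
  rewrite hphi; apply/eqP; rewrite subr_eq0; apply/eqP.
  by field.
have := Tl_coef0 w x F; have := Tl_coef1 w x F; rewrite -/g hg.
rewrite !coefD !coefC !coefZ !coefX /= mulr0 mulr1 add0r addr0 => h1 h0.
have := Tl_horner w x F 1; rewrite -/g hg hornerD hornerC hornerZ hornerX mulr1.
rewrite -h0 -h1 => ->; apply: meval_eq => i; by rewrite mul1r addrC.
Qed.

Lemma mderiv_homog n d (p : {mpoly K[n]}) i :
  p \is d.+1.-homog -> mderiv i p \is d.-homog.
Proof.
move=> hp; apply/dhomogP => m; rewrite mcoeff_msupp mcoeff_deriv.
rewrite mulrn_eq0 negb_or => /andP [_ hm].
have := dhomog_mf hp; move/(_ (m + U_(i))%MM); rewrite mcoeff_msupp hm.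
move/(_ isT) => h; have : mdeg (m + U_(i))%MM = d.+1 by exact: h.
by rewrite mdegD mdeg1 addn1 => -[].
Qed.

Lemma homog_at0 n d (p : {mpoly K[n]}) :
  p \is d.+1.-homog -> p.@[fun _ => 0] = 0.
Proof.
move=> hp; have := meval_homog 0 (fun _ => 0) hp.
rewrite exprS !mul0r => h; rewrite -h; apply: meval_eq => i; by rewrite ?mul0r.
Qed.

Lemma nz_coord n d (p : {mpoly K[n]}) v :
  p \is d.+1.-homog -> p.@[v] != 0 -> exists i, v i != 0.
Proof.
move=> hp hv; apply: NNPP => hn; move: hv; rewrite -(homog_at0 hp).
rewrite (@meval_eq _ _ v (fun _ => 0)) ?eqxx // => i.
by apply: NNPP => h; apply: hn; exists i; apply/eqP.
Qed.

Lemma nz_point n (p : {mpoly K[n]}) : p != 0 -> exists v, p.@[v] != 0.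
Proof.
move=> hp; apply: NNPP => hn; move/eqP: hp; apply; apply: vanish_zero => v.
by apply: NNPP => h; apply: hn; exists v; apply/eqP.
Qed.

Definition affine_poly n (f : {mpoly K[n]}) := forall z1 z2 mu,
  f.@[z1] = 0 -> f.@[z2] = 0 -> f.@[fun i => z1 i + mu * (z2 i - z1 i)] = 0.

Lemma irred_lc n (A : seq {mpoly K[n]}) (g : {mpoly K[n]}) :
  (forall f, f \in A -> affine_poly f) ->
  (exists z, loc_closed A [:: g] z) -> irreducible_set (loc_closed A [:: g]).
Proof.
move=> hA hne; split => // p q hpq.
apply: NNPP => /not_or_and [/not_all_ex_not [z1 h1] /not_all_ex_not [z2 h2]].
have [hz1 hp1] := imply_to_and _ _ h1; have [hz2 hq2] := imply_to_and _ _ h2.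
pose w := fun i => z2 i - z1 i.
pose P := Tl z1 w p; pose Q := Tl z1 w q; pose G := Tl z1 w g.
have hg1 : g.@[z1] != 0.
  by case: hz1 => _ [g' ]; rewrite inE => /eqP ->.
have hP : P != 0.
  apply: contra_notN hp1 => /eqP hP0; have := Tl_coef0 z1 w p.
  by rewrite -/P hP0 coef0 => <-.
have hQ : Q != 0.
  apply: contra_notN hq2 => /eqP hQ0; have := Tl_horner z1 w q 1.
  rewrite -/Q hQ0 horner0 => ->; apply: meval_eq => i.
  by rewrite /w mul1r addrC subrK.
have hG : G != 0.
  apply: contraNneq hg1 => hG0; have := Tl_coef0 z1 w g.
  by rewrite -/G hG0 coef0 => <-.
have hPQG : P * Q * G != 0 by rewrite !mulf_neq0.
have [mu [hmu hval]] : exists mu, mu != 0 /\ (P * Q * G).[mu] != 0.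
  apply: NNPP => hn; move/eqP: hPQG; apply; apply: poly_vanish_nz => mu hmu.
  by apply: NNPP => h; apply: hn; exists mu; split => //; apply/eqP.
pose z := fun i => z1 i + mu * w i.
have hz : loc_closed A [:: g] z.
  split.
    move=> f hf; apply: (hA f hf).
      by case: hz1 => + _; apply.
    by case: hz2 => + _; apply.
  exists g; first by rewrite inE.
  apply: contraNneq hval => hg0.
  by rewrite !hornerM /G (Tl_horner z1 w g) -/z hg0 mulr0.
have := hpq z hz; rewrite mevalM -!Tl_horner -/P -/Q => hz0.
by move: hval; rewrite !hornerM hz0 mul0r eqxx.
Qed.
End Gen.

Section Key.
Variable K : numFieldType.
Variables (F : {mpoly K[5]}) (a b : 'I_5 -> K).
Hypothesis hF : F \is 3.-homog.
Hypothesis hS : forall s t : K, F.@[fun i => s * a i + t * b i] = 0 /\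
  forall j, (mderiv j F).@[fun i => s * a i + t * b i] = 0.

Definition LF (c : 'I_5 -> K) : {mpoly K[5]} := \sum_i c i *: mderiv i F.

Lemma LFE c v : (LF c).@[v] = \sum_i c i * (mderiv i F).@[v].
Proof. rewrite /LF (raddf_sum (meval v)); apply: eq_bigr => i _.
exact: mevalZ. Qed.

Lemma LF_homog c : LF c \is 2.-homog.
Proof.
rewrite /LF; apply: rpred_sum => i _; apply: rpredZ; exact: mderiv_homog.
Qed.

Lemma keyF al be v :
  F.@[fun i => al * a i + be * b i + v i] = al * (LF a).@[v] + be * (LF b).@[v] + F.@[v].
Proof.
have [h0 h1] := hS al be.
rewrite (taylor_sing v hF h0 h1) !LFE addrC; congr (_ + _).
rewrite !big_distrr -big_split; apply: eq_bigr => i _ /=.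
by ring.
Qed.

Lemma keyLA al be v :
  (LF a).@[fun i => al * a i + be * b i + v i] = (LF a).@[v].
Proof.
set y := fun i => _.
have hT : Tl y a F = (al * (LF a).@[v] + be * (LF b).@[v] + F.@[v])%:P + (LF a).@[v] *: 'X.
  apply/eqP; rewrite -subr_eq0; apply/eqP; apply: poly_vanish_nz => mu _.
  rewrite hornerD hornerN hornerD hornerC hornerZ hornerX Tl_horner.
  have -> : F.@[fun i => y i + mu * a i] = F.@[fun i => (al + mu) * a i + be * b i + v i].
    by apply: meval_eq => i; rewrite /y mulrDl; ring.
  by rewrite keyF; apply/eqP; rewrite subr_eq0; apply/eqP; ring.
have := Tl_coef1 y a F; rewrite hT coefD coefC coefZ coefX /= mulr1 add0r => ->.
by rewrite LFE; apply: eq_bigr => i _; rewrite mulrC.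
Qed.
End Key.

Section Line.
Variable K : numFieldType.
Variables (a b : 'I_5 -> K) (i0 j0 : 'I_5).
Hypothesis hd : a i0 * b j0 - a j0 * b i0 != 0.

Definition dl := a i0 * b j0 - a j0 * b i0.
Definition sc (x : 'I_5 -> K) := (x i0 * b j0 - x j0 * b i0) / dl.
Definition tc (x : 'I_5 -> K) := (a i0 * x j0 - a j0 * x i0) / dl.
Definition wc (x : 'I_5 -> K) i := x i - sc x * a i - tc x * b i.
Definition Ps : {mpoly K[5]} := (b j0 / dl) *: 'X_i0 - (b i0 / dl) *: 'X_j0.
Definition Pt : {mpoly K[5]} := (a i0 / dl) *: 'X_j0 - (a j0 / dl) *: 'X_i0.
Definition Pw i : {mpoly K[5]} := 'X_i - a i *: Ps - b i *: Pt.

Lemma PsE x : Ps.@[x] = sc x.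
Proof. by rewrite /Ps mevalB !mevalZ !mevalXU /sc /dl; field. Qed.
Lemma PtE x : Pt.@[x] = tc x.
Proof. by rewrite /Pt mevalB !mevalZ !mevalXU /tc /dl; field. Qed.
Lemma PwE x i : (Pw i).@[x] = wc x i.
Proof. by rewrite /Pw !mevalB !mevalZ mevalXU PsE PtE /wc; ring. Qed.

Lemma X_homog (i : 'I_5) : ('X_i : {mpoly K[5]}) \is 1.-homog.
Proof. rewrite dhomogX; apply/eqP; exact: mdeg1. Qed.
Lemma Ps_homog : Ps \is 1.-homog.
Proof. by rewrite /Ps rpredB ?rpredZ ?X_homog. Qed.
Lemma Pt_homog : Pt \is 1.-homog.
Proof. by rewrite /Pt rpredB ?rpredZ ?X_homog. Qed.
Lemma Pw_homog i : Pw i \is 1.-homog.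
Proof. by rewrite /Pw !rpredB ?rpredZ ?X_homog ?Ps_homog ?Pt_homog. Qed.

Lemma decomp x i : x i = sc x * a i + tc x * b i + wc x i.
Proof. rewrite /wc; ring. Qed.
Lemma wc_i0 x : wc x i0 = 0.
Proof. rewrite /wc /sc /tc /dl; field; exact: hd. Qed.
Lemma wc_j0 x : wc x j0 = 0.
Proof. rewrite /wc /sc /tc /dl; field; exact: hd. Qed.
Lemma sc_lin al be v : v i0 = 0 -> v j0 = 0 ->
  sc (fun i => al * a i + be * b i + v i) = al.
Proof. move=> h0 h1; rewrite /sc /dl h0 h1; field; exact: hd. Qed.
Lemma tc_lin al be v : v i0 = 0 -> v j0 = 0 ->
  tc (fun i => al * a i + be * b i + v i) = be.
Proof. move=> h0 h1; rewrite /tc /dl h0 h1; field; exact: hd. Qed.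
Lemma wc_lin al be v i : v i0 = 0 -> v j0 = 0 ->
  wc (fun i => al * a i + be * b i + v i) i = v i.
Proof. move=> h0 h1; rewrite /wc sc_lin // tc_lin //; ring. Qed.
End Line.

Definition lift5 (K : numFieldType) (p : {mpoly K[5]}) : {mpoly K[6]} :=
  p \mPo [tuple 'X_(widen_ord (leqnSn 5) i) | i < 5].

Lemma lift5E (K : numFieldType) (p : {mpoly K[5]}) (y : 'I_6 -> K) :
  (lift5 p).@[y] = p.@[first_coords y].
Proof.
rewrite /lift5 comp_mpoly_meval; apply: meval_eq => i.
by rewrite tnth_mktuple mevalXU.
Qed.

Lemma widen_inord (i : 'I_6) : (i < 5)%N -> widen_ord (leqnSn 5) (inord i) = i.
Proof. by move=> h; apply/val_inj; rewrite /= inordK. Qed.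

Lemma inord_widen (i : 'I_5) : inord (widen_ord (leqnSn 5) i) = i.
Proof. by apply/val_inj; rewrite /= inordK // ltnS ltnW. Qed.

Lemma homog_in1 (K : numFieldType) (G : {mpoly K[5]}) d :
  G \is d.-homog -> homog_family [:: G].
Proof. by move=> h G'; rewrite inE => /eqP ->; exists d. Qed.

Lemma affX n (K : numFieldType) (i : 'I_n) : affine_poly ('X_i : {mpoly K[n]}).
Proof. by move=> z1 z2 mu; rewrite !mevalXU => -> ->; rewrite subrr mulr0 addr0. Qed.

Section CaseA.
Variable K : numFieldType.
Variables (F : {mpoly K[5]}) (a b : 'I_5 -> K) (i0 j0 : 'I_5).
Hypothesis hF : F \is 3.-homog.
Hypothesis hS : forall s t : K, F.@[fun i => s * a i + t * b i] = 0 /\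
  forall j, (mderiv j F).@[fun i => s * a i + t * b i] = 0.
Hypothesis hd : a i0 * b j0 - a j0 * b i0 != 0.
Hypothesis hA : exists x, (LF F a).@[x] != 0.

Local Notation LA := (LF F a).
Local Notation LB := (LF F b).
Local Notation sc := (sc a b i0 j0).
Local Notation tc := (tc a b i0 j0).
Local Notation wc := (wc a b i0 j0).

Let hS' : forall s t : K, F.@[fun i => s * b i + t * a i] = 0 /\
  forall j, (mderiv j F).@[fun i => s * b i + t * a i] = 0.
Proof.
move=> s t; have [h0 h1] := hS t s.
have e : forall i, s * b i + t * a i = t * a i + s * b i by move=> i; rewrite addrC.
split; first by rewrite (meval_eq _ e).
by move=> j; rewrite (meval_eq _ e).
Qed.

Let kF al be v := keyF hF hS al be v.
Let kLA al be v := keyLA hF hS al be v.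
Let kLB al be v : LB.@[fun i => al * a i + be * b i + v i] = LB.@[v].
Proof.
rewrite -(keyLA hF hS' be al v); apply: meval_eq => i; ring.
Qed.

Let dec x : (fun i => sc x * a i + tc x * b i + wc x i) =1 x.
Proof. by move=> i; rewrite -decomp. Qed.

Let LAw x : LA.@[x] = LA.@[wc x].
Proof. by rewrite -{1}(meval_eq _ (dec x)) kLA. Qed.
Let LBw x : LB.@[x] = LB.@[wc x].
Proof. by rewrite -{1}(meval_eq _ (dec x)) kLB. Qed.
Let Fw x : F.@[x] = sc x * LA.@[x] + tc x * LB.@[wc x] + F.@[wc x].
Proof. rewrite -{1}(meval_eq _ (dec x)) kF.
by rewrite -LAw. Qed.

Definition GA (j : 'I_6) : {mpoly K[5]} :=
  if (j < 5)%N then Pw a b i0 j0 (inord j) * LA else Pt a b i0 j0 * LA.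
Definition phiA (x : vec K 5) : vec K 6 := fun j => (GA j).@[x] / F.@[x].
Definition tauA (y : vec K 6) := y ord_max.
Definition psiA (y : vec K 6) : vec K 5 := fun i =>
  (LA.@[first_coords y] - tauA y * LB.@[first_coords y] - F.@[first_coords y]) * a i
  + (tauA y * LA.@[first_coords y]) * b i + LA.@[first_coords y] * first_coords y i.
Definition gA (i : 'I_5) : {mpoly K[6]} :=
  (lift5 LA - 'X_ord_max * lift5 LB - lift5 F) * (a i)%:MP
  + 'X_ord_max * lift5 LA * (b i)%:MP + lift5 LA * 'X_(widen_ord (leqnSn 5) i).

Lemma gAE i y : (gA i).@[y] = psiA y i.
Proof.
rewrite /gA /psiA /tauA !mevalD !mevalM !mevalB !mevalM !lift5E !mevalC !mevalXU.
by [].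
Qed.

Lemma phiA_fc x i : first_coords (phiA x) i = (LA.@[x] / F.@[x]) * wc x i.
Proof.
rewrite /first_coords /phiA /GA /= ltn_ord inord_widen mevalM (PwE hd); ring.
Qed.

Lemma phiA_max x : phiA x ord_max = tc x * (LA.@[x] / F.@[x]).
Proof. by rewrite /phiA /GA /= mevalM (PtE hd) mulrA. Qed.



Section YA.
Variable y : vec K 6.
Hypothesis hy : cyl_set (loc_closed [:: 'X_i0; 'X_j0] [:: LA]) y.
Let v := first_coords y.
Let L := LA.@[v].
Let v0 : v i0 = 0.
Proof. by case: hy => h _; have := h 'X_i0; rewrite mevalXU !inE eqxx; apply. Qed.
Let v1 : v j0 = 0.
Proof. by case: hy => h _; have := h 'X_j0; rewrite mevalXU !inE eqxx orbT; apply. Qed.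
Let hL : L != 0.
Proof. by case: hy => _ [G]; rewrite inE => /eqP ->. Qed.
Let v'0 : (fun i => L * v i) i0 = 0. Proof. by rewrite /= v0 mulr0. Qed.
Let v'1 : (fun i => L * v i) j0 = 0. Proof. by rewrite /= v1 mulr0. Qed.

Lemma FpsiA : F.@[psiA y] = L ^+ 4.
Proof.
rewrite /psiA kF -/v -/L (meval_homog _ _ (LF_homog hF a)) (meval_homog _ _ (LF_homog hF b)).
rewrite (meval_homog _ _ hF) -/L /tauA; ring.
Qed.
Lemma LApsiA : LA.@[psiA y] = L ^+ 3.
Proof.
by rewrite /psiA kLA -/v -/L (meval_homog _ _ (LF_homog hF a)) -/L exprS mulrC.
Qed.
Lemma tcpsiA : tc (psiA y) = tauA y * L.
Proof. by rewrite /psiA -/v -/L (tc_lin hd). Qed.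
Lemma wcpsiA i : wc (psiA y) i = L * v i.
Proof. by rewrite /psiA -/v -/L (wc_lin hd). Qed.
Lemma psiA_U : open_in_compl F [:: LA] (psiA y).
Proof.
split; first by rewrite FpsiA expf_neq0.
by exists LA; rewrite ?inE // LApsiA expf_neq0.
Qed.
Lemma phipsiA : phiA (psiA y) = y.
Proof.
apply: functional_extensionality => j.
have hF4 : F.@[psiA y] != 0 by rewrite FpsiA expf_neq0.
case: (ltnP j 5) => hj.
  rewrite /phiA /GA hj mevalM (PwE hd) wcpsiA LApsiA FpsiA /v /first_coords widen_inord //.
  by field.
have -> : j = ord_max by apply/val_inj; apply/eqP; rewrite eqn_leq hj -ltnS ltn_ord.
rewrite /phiA /GA /= mevalM (PtE hd) tcpsiA LApsiA FpsiA /tauA.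
by field.
Qed.
End YA.

Lemma caseA_cyl : contains_cylinder F.
Proof.
exists [:: LA], 5%N, [:: 'X_i0; 'X_j0], [:: LA]; split.
- exact: (homog_in1 (LF_homog hF a)).
- apply: irred_lc.
    by move=> f; rewrite !inE => /orP [] /eqP ->; exact: affX.
  have [x hx] := hA; exists (wc x); split.
    by move=> f; rewrite !inE => /orP [] /eqP ->; rewrite mevalXU ?(wc_i0 hd) ?(wc_j0 hd).
  by exists LA; rewrite ?inE // -LAw.
exists phiA, psiA; split.
- split; last by move=> y hy; apply: psiA_U.
  move=> x [hFx [G]]; rewrite inE => /eqP -> hLx; split.
    move=> f; rewrite !inE => /orP [] /eqP ->;
      by rewrite mevalXU phiA_fc ?(wc_i0 hd) ?(wc_j0 hd) mulr0.
  exists LA; first by rewrite inE.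
  rewrite (meval_eq _ (phiA_fc x)) (meval_homog _ _ (LF_homog hF a)) -LAw.
  by rewrite !mulf_neq0 ?expf_neq0 ?invr_eq0.
- move=> x [hFx [G]]; rewrite inE => /eqP -> hLx.
  exists ((LA.@[x] / F.@[x]) ^+ 3 * LA.@[x]); first by rewrite !mulf_neq0 ?expf_neq0 ?invr_eq0.
  move=> i; rewrite /psiA (meval_eq LA (phiA_fc x)) (meval_eq LB (phiA_fc x)) (meval_eq F (phiA_fc x)) (meval_homog _ _ (LF_homog hF a)).
  rewrite (meval_homog _ _ (LF_homog hF b)) (meval_homog _ _ hF) -LAw phiA_fc /tauA phiA_max.
  have hFw : F.@[wc x] = F.@[x] - sc x * LA.@[x] - tc x * LB.@[wc x] by rewrite (Fw x); ring.
  rewrite hFw (decomp a b i0 j0 x i); by field.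
- move=> y hy; exact: phipsiA.
- move=> j x hx; exists 3%N, (GA j), F; split => //; last by case: hx.
  rewrite /GA; case: ifP => _.
    exact: (dhomogM (Pw_homog _ _ _ _ _) (LF_homog hF a)).
  exact: (dhomogM (Pt_homog _ _ _ _) (LF_homog hF a)).
- move=> y hy; exists gA, 1; split.
  + by rewrite meval1 oner_neq0.
  + have := psiA_U hy => -[hF4 _].
    have [i hi] := nz_coord hF hF4; by exists i; rewrite gAE.
  + by move=> y' _ _; exists 1; rewrite ?oner_neq0 // => i; rewrite gAE mul1r.
Qed.
End CaseA.

Section CaseC.
Variable K : numFieldType.
Variables (F : {mpoly K[5]}) (a b : 'I_5 -> K) (i0 j0 k : 'I_5).
Hypothesis hF : F \is 3.-homog.
Hypothesis hS : forall s t : K, F.@[fun i => s * a i + t * b i] = 0 /\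
  forall j, (mderiv j F).@[fun i => s * a i + t * b i] = 0.
Hypothesis hd : a i0 * b j0 - a j0 * b i0 != 0.
Hypothesis hC : forall x, (LF F a).@[x] = 0 /\ (LF F b).@[x] = 0.

Local Notation sc := (sc a b i0 j0).
Local Notation tc := (tc a b i0 j0).
Local Notation wc := (wc a b i0 j0).
Local Notation Pt := (Pt a b i0 j0).
Local Notation Wk := (Pw a b i0 j0 k).

Let Finv al be v : F.@[fun i => al * a i + be * b i + v i] = F.@[v].
Proof. by rewrite (keyF hF hS) !(hC v).1 (hC v).2 !mulr0 !add0r. Qed.

Lemma Fshift x be : F.@[fun i => x i + be * b i] = F.@[x].
Proof.
have e1 : (fun i => sc x * a i + (tc x + be) * b i + wc x i) =1 (fun i => x i + be * b i).
  by move=> i; rewrite (decomp a b i0 j0 x i); ring.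
have e2 : (fun i => sc x * a i + tc x * b i + wc x i) =1 x.
  by move=> i; rewrite -decomp.
by rewrite -(meval_eq _ e1) Finv -(meval_eq F e2) Finv.
Qed.

Definition GC (j : 'I_6) : {mpoly K[5]} :=
  if (j < 5)%N then 'X_(inord j) - b (inord j) *: Pt else Pt.
Definition phiC (x : vec K 5) : vec K 6 := fun j => (GC j).@[x] / Wk.@[x].
Definition psiC (y : vec K 6) : vec K 5 := fun i => first_coords y i + y ord_max * b i.
Definition gC (i : 'I_5) : {mpoly K[6]} :=
  'X_(widen_ord (leqnSn 5) i) + 'X_ord_max * (b i)%:MP.

Lemma gCE i y : (gC i).@[y] = psiC y i.
Proof. by rewrite /gC /psiC mevalD mevalM !mevalXU mevalC. Qed.

Lemma phiC_fc x i : first_coords (phiC x) i = (wc x k)^-1 * (x i + (- tc x) * b i).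
Proof.
rewrite /first_coords /phiC /GC /= ltn_ord inord_widen mevalB mevalZ mevalXU.
rewrite (PtE hd) (PwE hd); ring.
Qed.
Lemma phiC_max x : phiC x ord_max = tc x / wc x k.
Proof. by rewrite /phiC /GC /= (PtE hd) (PwE hd). Qed.

Lemma WkE z : (Wk - 1).@[z] = wc z k - 1.
Proof. by rewrite mevalB meval1 (PwE hd). Qed.

Definition ZC := loc_closed [:: Pt; Wk - 1] [:: F].

Lemma phiC_Z x : F.@[x] != 0 -> wc x k != 0 -> ZC (first_coords (phiC x)).
Proof.
move=> hFx hw; split.
  move=> f; rewrite !inE => /orP [] /eqP ->.
    rewrite (PtE hd) /tc !phiC_fc /tc /dl; field; by rewrite hd hw.
  rewrite mevalB meval1 (PwE hd) /wc /sc /tc !phiC_fc /wc /sc /tc /dl; field.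
  rewrite hd /=; apply: contraNneq hw => h0.
  have -> : wc x k = (x k * (a i0 * b j0 - a j0 * b i0) - (x i0 * b j0 - x j0 * b i0) * a k -
   (a i0 * x j0 - a j0 * x i0) * b k) / (a i0 * b j0 - a j0 * b i0).
    by rewrite /wc /sc /tc /dl; field.
  by rewrite h0 mul0r.
exists F; first by rewrite inE.
rewrite (meval_eq _ (phiC_fc x)) (meval_homog _ _ hF) Fshift.
by rewrite mulf_neq0 ?expf_neq0 ?invr_eq0.
Qed.

Section YC.
Variable y : vec K 6.
Hypothesis hy : cyl_set ZC y.
Let z := first_coords y.
Let t0 : tc z = 0.
Proof. by case: hy => h _; have := h Pt; rewrite (PtE hd) !inE eqxx; apply. Qed.
Let w1 : wc z k = 1.
Proof.
case: hy => h _; have := h (Wk - 1); rewrite mevalB meval1 (PwE hd) !inE eqxx orbT.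
by move/(_ isT)/eqP; rewrite subr_eq0 => /eqP.
Qed.
Let hFz : F.@[z] != 0.
Proof. by case: hy => _ [G]; rewrite inE => /eqP ->. Qed.

Lemma tcpsiC : tc (psiC y) = y ord_max.
Proof.
have -> : tc (psiC y) = tc z + y ord_max by rewrite /psiC /tc /dl -/z; field.
by rewrite t0 add0r.
Qed.
Lemma wcpsiC : wc (psiC y) k = 1.
Proof.
have -> : wc (psiC y) k = wc z k by rewrite /psiC /wc /sc /tc /dl -/z; field.
by rewrite w1.
Qed.
Lemma psiC_U : open_in_compl F [:: Wk] (psiC y).
Proof.
split; first by rewrite /psiC Fshift.
by exists Wk; rewrite ?inE // (PwE hd) wcpsiC oner_neq0.
Qed.
Lemma phipsiC : phiC (psiC y) = y.
Proof.
apply: functional_extensionality => j.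
case: (ltnP j 5) => hj.
  rewrite /phiC /GC hj mevalB mevalZ mevalXU (PtE hd) (PwE hd) wcpsiC tcpsiC.
  rewrite /psiC /first_coords widen_inord //; by field.
have -> : j = ord_max by apply/val_inj; apply/eqP; rewrite eqn_leq hj -ltnS ltn_ord.
by rewrite phiC_max wcpsiC tcpsiC divr1.
Qed.
End YC.

Lemma caseC_cyl : (exists x, F.@[x] != 0 /\ wc x k != 0) -> contains_cylinder F.
Proof.
move=> [x0 [hF0 hw0]].
exists [:: Wk], 5%N, [:: Pt; Wk - 1], [:: F]; split.
- exact: (homog_in1 (Pw_homog _ _ _ _ k)).
- apply: irred_lc; last by exists (first_coords (phiC x0)); apply: phiC_Z.
  move=> f; rewrite !inE => /orP [] /eqP -> z1 z2 mu.
    rewrite !(PtE hd) => h1 h2.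
    have -> : tc (fun i => z1 i + mu * (z2 i - z1 i)) = tc z1 + mu * (tc z2 - tc z1).
      by rewrite /tc /dl; field.
    by rewrite h1 h2 subrr mulr0 addr0.
  rewrite !WkE => h1 h2.
  have -> : wc (fun i => z1 i + mu * (z2 i - z1 i)) k - 1 =
     (wc z1 k - 1) + mu * ((wc z2 k - 1) - (wc z1 k - 1)).
    by rewrite /wc /sc /tc /dl; field.
  by rewrite h1 h2 subrr mulr0 addr0.
exists phiC, psiC; split.
- split; last by move=> y hy; apply: psiC_U.
  move=> x [hFx [G]]; rewrite inE => /eqP -> hw; rewrite (PwE hd) in hw.
  exact: phiC_Z.
- move=> x [hFx [G]]; rewrite inE => /eqP -> hw; rewrite (PwE hd) in hw.
  exists (wc x k)^-1; first by rewrite invr_eq0.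
  move=> i; rewrite /psiC phiC_fc phiC_max; by field.
- move=> y hy; exact: phipsiC.
- move=> j x hx; exists 1%N, (GC j), Wk; split => //.
  + rewrite /GC; case: ifP => _; last exact: Pt_homog.
    by rewrite rpredB ?rpredZ ?X_homog ?Pt_homog.
  + exact: Pw_homog.
  + by case: hx => _ [G]; rewrite inE => /eqP ->.
- move=> y hy; exists gC, 1; split.
  + by rewrite meval1 oner_neq0.
  + have := psiC_U hy => -[hF4 _].
    have [i hi] := nz_coord hF hF4; by exists i; rewrite gCE.
  + by move=> y' _ _; exists 1; rewrite ?oner_neq0 // => i; rewrite gCE mul1r.
Qed.
End CaseC.

Theorem proposition5p1 (R : realType) (F : {mpoly R[i][5]}) (a b : vec R[i] 5) :
  cubic_form F -> line_in_sing F a b -> contains_cylinder F.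
Proof.
move=> [hnz hF] [hind hsing].
have hS : forall s t, F.@[fun i => s * a i + t * b i] = 0 /\
    forall j, (mderiv j F).@[fun i => s * a i + t * b i] = 0.
  by move=> s t; exact: (hsing s t).
have [i0 [j0 hd]] : exists i0 j0, a i0 * b j0 - a j0 * b i0 != 0.
  apply: NNPP => hn.
  have hall : forall i j, a i * b j - a j * b i = 0.
    move=> i j; apply: NNPP => h; apply: hn; exists i, j; exact/eqP.
  case: (classic (exists p, a p != 0)) => [[p hp]|ha].
    have hz : forall i, lin_comb (b p) (- a p) a b i = 0.
      by move=> i; rewrite /lin_comb -(hall i p); ring.
    have [_ h] := hind _ _ hz.
    by move: hp; rewrite -oppr_eq0 h eqxx.
  have ha0 : forall i, a i = 0.
    move=> i; apply: NNPP => h; apply: ha; exists i; exact/eqP.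
  have hz : forall i, lin_comb 1 0 a b i = 0.
    by move=> i; rewrite /lin_comb ha0 mul0r mulr0 addr0.
  have [h _] := hind _ _ hz.
  by move: (oner_neq0 R[i]); rewrite h eqxx.
case: (classic (exists x, (LF F a).@[x] != 0)) => [hA|hnA].
  exact: (caseA_cyl hF hS hd hA).
case: (classic (exists x, (LF F b).@[x] != 0)) => [hB|hnB].
  have hS' : forall s t, F.@[fun i => s * b i + t * a i] = 0 /\
      forall j, (mderiv j F).@[fun i => s * b i + t * a i] = 0.
    move=> s t; have [h0 h1] := hS t s.
    have e : forall i, s * b i + t * a i = t * a i + s * b i by move=> i; rewrite addrC.
    split; first by rewrite (meval_eq _ e).
    by move=> j; rewrite (meval_eq _ e).
  have hd' : b i0 * a j0 - b j0 * a i0 != 0.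
    have -> : b i0 * a j0 - b j0 * a i0 = - (a i0 * b j0 - a j0 * b i0) by ring.
    by rewrite oppr_eq0.
  exact: (caseA_cyl hF hS' hd' hB).
have hC : forall x, (LF F a).@[x] = 0 /\ (LF F b).@[x] = 0.
  move=> x; split; apply: NNPP => h; [apply: hnA | apply: hnB]; exists x; exact/eqP.
have [x0 hx0] := nz_point hnz.
have hw : F.@[wc a b i0 j0 x0] != 0.
  have e : (fun i => sc a b i0 j0 x0 * a i + tc a b i0 j0 x0 * b i + wc a b i0 j0 x0 i) =1 x0.
    by move=> i; rewrite -decomp.
  move: hx0; rewrite -(meval_eq F e) (keyF hF hS) (hC _).1 (hC _).2 !mulr0 !add0r.
  by [].
have [k hk] := nz_coord hF hw.
exact: (@caseC_cyl _ F a b i0 j0 k hF hS hd hC (ex_intro _ x0 (conj hx0 hk))).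
Qed.
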